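(* Let $G$ be a finite group, $F$ a field with $\operatorname{char}(F)\nmid|G|$, and $[\alpha]\in H^2(G,F^* )$. Then the semisimple algebra $F^\alpha G$ has a commutative simple component in its Wedderburn decomposition if and only if $[\alpha]$ lies in the image of the restriction to $\operatorname{Ext}(G/G',F^* )$ of the inflation map $H^2(G/G',F^* )\to H^2(G,F^* )$.
   Context: $H^2(X,F^* )$ is the second cohomology group with trivial action. For an abelian group $A$, $\operatorname{Ext}(A,F^* )$ is the subgroup of $H^2(A,F^* )$ consisting of classes represented by symmetric cocycles ($\beta(x,y)=\beta(y,x)$). The inflation map $H^2(G/G',F^* )\to H^2(G,F^* )$ sends the class of $\beta$ to the class of $(x,y)\mapsto\beta(xG',yG')$. For $\alpha\in Z^2(G,F^* )$ the twisted group algebra $F^\alpha G$ has $F$-basis $\{u_g\}$, $F$ central, $u_gu_h=\alpha(g,h)u_{gh}$. *)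

(* Defs.v *)
From HB Require Import structures.
From mathcomp Require Import all_boot all_order all_algebra all_fingroup all_solvable.
Set Implicit Arguments. Unset Strict Implicit. Unset Printing Implicit Defensive.
Import GRing.Theory.
Local Open Scope ring_scope.

(* The finite group G is the whole finGroupType gT (G = [set: gT]).      *)

Definition cocycle2 (gT : finGroupType) (F : fieldType) (a : gT -> gT -> F) : Prop :=
  (forall x y, a x y != 0) /\
  (forall x y z, a x y * a (x * y)%g z = a y z * a x (y * z)%g).

Definition cohomologous (gT : finGroupType) (F : fieldType) (a b : gT -> gT -> F) : Prop :=
  exists f : gT -> F, (forall x, f x != 0) /\
    (forall x y, b x y = f x * f y * (f (x * y)%g)^-1 * a x y).

Definition symmetric_cocycle (gT : finGroupType) (F : fieldType) (b : gT -> gT -> F) : Prop :=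
  cocycle2 b /\ forall x y, b x y = b y x.

(* The twisted group algebra F^a G: elements sum_g c_g u_g are represented by
   their coefficient functions c : {ffun gT -> F}; u_x u_y = a(x,y) u_{xy}. *)
Definition tw_mul (gT : finGroupType) (F : fieldType) (a : gT -> gT -> F)
    (u v : {ffun gT -> F}) : {ffun gT -> F} :=
  [ffun z => \sum_(x : gT) u x * v (x^-1 * z)%g * a x (x^-1 * z)%g].

Definition tw_central (gT : finGroupType) (F : fieldType) (a : gT -> gT -> F)
    (e : {ffun gT -> F}) : Prop :=
  forall u, tw_mul a e u = tw_mul a u e.

Definition tw_central_idem (gT : finGroupType) (F : fieldType) (a : gT -> gT -> F)
    (e : {ffun gT -> F}) : Prop :=
  tw_central a e /\ tw_mul a e e = e.

(* primitive central idempotent: nonzero central idempotent not a sum of two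
   nonzero orthogonal central idempotents, i.e. the only central idempotents
   below it (f = e f) are 0 and e. *)
Definition tw_primitive_central_idem (gT : finGroupType) (F : fieldType)
    (a : gT -> gT -> F) (e : {ffun gT -> F}) : Prop :=
  tw_central_idem a e /\ e != 0 /\
  forall f, tw_central_idem a f -> tw_mul a e f = f -> f = 0 \/ f = e.

(* The Wedderburn (simple) components of the semisimple algebra F^a G are the
   ideals e F^a G for the primitive central idempotents e. *)
Definition has_commutative_simple_component (gT : finGroupType) (F : fieldType)
    (a : gT -> gT -> F) : Prop :=
  exists e, tw_primitive_central_idem a e /\
    forall u v, tw_mul a (tw_mul a e u) (tw_mul a e v) = tw_mul a (tw_mul a e v) (tw_mul a e u).

Definition in_inflated_Ext (gT : finGroupType) (F : fieldType) (a : gT -> gT -> F) : Prop :=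
  exists b : coset_of ([set: gT]^`(1))%g -> coset_of ([set: gT]^`(1))%g -> F,
    symmetric_cocycle b /\
    cohomologous a (fun x y => b (coset ([set: gT]^`(1))%g x) (coset ([set: gT]^`(1))%g y)).

(* Main.v *)
Require Import Defs.
From HB Require Import structures.
From mathcomp Require Import all_boot all_order all_algebra all_fingroup all_solvable.
From mathcomp Require Import ring.
From Stdlib Require Classical_Prop Classical_Pred_Type.
Set Implicit Arguments. Unset Strict Implicit. Unset Printing Implicit Defensive.
Import GRing.Theory.
Local Open Scope ring_scope.

Section TW.
Variables (gT : finGroupType) (F : fieldType) (a : gT -> gT -> F).
Local Notation A := {ffun gT -> F}.
Local Notation "u ** v" := (tw_mul a u v) (at level 40, left associativity).

Definition U (g : gT) : A := [ffun z => (z == g)%:R].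
Definition sc (k : F) (u : A) : A := [ffun z => k * u z].
Local Notation "k *s u" := (sc k u) (at level 40).
Lemma scA k l u : k *s (l *s u) = (k * l) *s u.
Proof. by apply/ffunP => z; rewrite !ffunE mulrA. Qed.
Lemma sc0 u : 0 *s u = 0.
Proof. by apply/ffunP => z; rewrite !ffunE mul0r. Qed.
Lemma sc1 u : 1 *s u = u.
Proof. by apply/ffunP => z; rewrite !ffunE mul1r. Qed.
Lemma scr0 k : k *s 0 = 0.
Proof. by apply/ffunP => z; rewrite !ffunE mulr0. Qed.

Lemma tw_mulDl u1 u2 v : (u1 + u2) ** v = u1 ** v + u2 ** v.
Proof. apply/ffunP => z; rewrite !ffunE -big_split; apply: eq_bigr => x _; rewrite ffunE /=; ring. Qed.
Lemma tw_mulDr u v1 v2 : u ** (v1 + v2) = u ** v1 + u ** v2.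
Proof. apply/ffunP => z; rewrite !ffunE -big_split; apply: eq_bigr => x _; rewrite ffunE /=; ring. Qed.
Lemma tw_mulZl k u v : (k *s u) ** v = k *s (u ** v).
Proof. apply/ffunP => z; rewrite !ffunE mulr_sumr; apply: eq_bigr => x _; rewrite ffunE; ring. Qed.
Lemma tw_mulZr k u v : u ** (k *s v) = k *s (u ** v).
Proof. apply/ffunP => z; rewrite !ffunE mulr_sumr; apply: eq_bigr => x _; rewrite ffunE; ring. Qed.
Lemma tw_mul0l v : 0 ** v = 0.
Proof. by apply/ffunP => z; rewrite !ffunE big1 // => x _; rewrite ffunE !mul0r. Qed.
Lemma tw_mul0r v : v ** 0 = 0.
Proof. by apply/ffunP => z; rewrite !ffunE big1 // => x _; rewrite ffunE mulr0 mul0r. Qed.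
Lemma tw_mulsl I (r : seq I) (P : pred I) (G : I -> A) v :
  (\sum_(i <- r | P i) G i) ** v = \sum_(i <- r | P i) (G i ** v).
Proof. exact: (big_morph (fun u => u ** v) (fun x y => tw_mulDl x y v) (tw_mul0l v)). Qed.
Lemma tw_mulsr I (r : seq I) (P : pred I) (G : I -> A) v :
  v ** (\sum_(i <- r | P i) G i) = \sum_(i <- r | P i) (v ** G i).
Proof. exact: (big_morph (fun u => v ** u) (fun x y => tw_mulDr v x y) (tw_mul0r v)). Qed.

Lemma tw_mulUU g h : U g ** U h = a g h *s U (g * h)%g.
Proof.
apply/ffunP => z; rewrite !ffunE (bigD1 g) //= big1 => [|x xg]; last first.
  by rewrite ffunE (negbTE xg) !mul0r.
rewrite !ffunE eqxx addr0 mul1r.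
have [->|ne] := eqVneq z (g * h)%g; first by rewrite mulKg eqxx; ring.
have -> : (g^-1 * z == h)%g = false.
  by apply/negbTE/eqP => E; move: ne; rewrite -E mulKVg eqxx.
by rewrite !mulr0 mul0r.
Qed.

Lemma decomp (u : A) : u = \sum_x u x *s U x.
Proof.
apply/ffunP => z; rewrite sum_ffunE (bigD1 z) //= big1 => [|x xz]; last first.
  by rewrite !ffunE eq_sym (negbTE xz) mulr0.
by rewrite !ffunE eqxx mulr1 addr0.
Qed.

Hypothesis ca : cocycle2 a.

Lemma tw_mulA3 x y z : (U x ** U y) ** U z = U x ** (U y ** U z).
Proof.
rewrite !tw_mulUU tw_mulZl tw_mulZr !tw_mulUU !scA mulgA.
by case: ca => _ ->.
Qed.
Lemma tw_mulA2 x y w : (U x ** U y) ** w = U x ** (U y ** w).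
Proof.
rewrite (decomp w) !tw_mulsr; apply: eq_bigr => z _.
by rewrite !tw_mulZr tw_mulA3.
Qed.
Lemma tw_mulA1 x v w : (U x ** v) ** w = U x ** (v ** w).
Proof.
rewrite (decomp v) tw_mulsr !tw_mulsl tw_mulsr; apply: eq_bigr => y _.
by rewrite tw_mulZr !tw_mulZl tw_mulZr tw_mulA2.
Qed.
Lemma tw_mulA u v w : (u ** v) ** w = u ** (v ** w).
Proof.
rewrite (decomp u) !tw_mulsl; apply: eq_bigr => x _.
by rewrite !tw_mulZl tw_mulA1.
Qed.


Lemma a_neq0 x y : a x y != 0.
Proof. by case: ca. Qed.

Lemma a_r1 z : a z 1%g = a 1%g 1%g.
Proof.
case: ca => nz co; have := co z 1%g 1%g; rewrite !mulg1 => E.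
by apply: (mulIf (nz z 1%g)); rewrite E mulrC.
Qed.

Lemma tw_mulU1r u : u ** U 1%g = a 1%g 1%g *s u.
Proof.
apply/ffunP => z; rewrite !ffunE (bigD1 z) //= big1 => [|x xz]; last first.
  rewrite ffunE; have -> : (x^-1 * z == 1)%g = false by rewrite -eq_mulVg1 (negbTE xz).
  by rewrite mulr0 mul0r.
by rewrite ffunE mulVg eqxx mulr1 addr0 a_r1 mulrC.
Qed.

Lemma zeroE z : (0 : A) z = 0.
Proof. exact: ffunE. Qed.

Lemma sc_inj k l (v : A) : k *s v = l *s v -> v != 0 -> k = l.
Proof.
move=> E; apply: contraNeq => kl; apply/eqP/ffunP => z.
have := congr1 (fun f : A => f z) E; rewrite !ffunE => /eqP.
rewrite -subr_eq0 -mulrBl mulf_eq0 subr_eq0 (negbTE kl) /= => /eqP ->.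
by [] || exact: esym (zeroE z).
Qed.

Lemma scK k (u v : A) : k != 0 -> k *s u = k *s v -> u = v.
Proof. by move=> k0 E; rewrite -(sc1 u) -(sc1 v) -(mulVf k0) -!scA E. Qed.

Section Fwd.
Variable e : A.
Hypothesis ecen : tw_central a e.
Hypothesis eid : e ** e = e.
Variable z0 : gT.
Hypothesis ez0 : e z0 != 0.
Hypothesis ecomm : forall u v, (e ** u) ** (e ** v) = (e ** v) ** (e ** u).

Lemma e_neq0 : e != 0.
Proof. by apply: contraNneq ez0 => ->; rewrite zeroE. Qed.

Definition phi g := e ** U g.
Definition lam (r : A) := r z0 / e z0.
Lemma lamP r k : r = k *s e -> lam r = k.
Proof. by move=> ->; rewrite /lam ffunE mulfK. Qed.

Lemma phiM g h : phi g ** phi h = a g h *s phi (g * h)%g.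
Proof.
rewrite /phi tw_mulA -(tw_mulA (U g)) -ecen tw_mulA -tw_mulA eid tw_mulUU.
by rewrite tw_mulZr.
Qed.
Lemma phi1 : phi 1%g = a 1%g 1%g *s e.
Proof. by rewrite /phi tw_mulU1r. Qed.
Lemma ephi g : e ** phi g = phi g.
Proof. by rewrite /phi -tw_mulA eid. Qed.
Lemma phie g : phi g ** e = phi g.
Proof. by rewrite /phi tw_mulA -ecen -tw_mulA eid. Qed.
Lemma phiV g : phi g^-1 ** phi g = (a g^-1 g * a 1%g 1%g) *s e.
Proof. by rewrite phiM mulVg phi1 scA. Qed.
Lemma phi_neq0 g : phi g != 0.
Proof.
apply/eqP => E; have := phiV g; rewrite E tw_mul0r => E2.
have : (a g^-1 g * a 1%g 1%g) *s e = 0 *s e by rewrite -E2 sc0.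
move/sc_inj => /(_ e_neq0) /eqP; rewrite mulf_eq0 !(negbTE (a_neq0 _ _)).
done.
Qed.
Lemma phi_cancel g r s : phi g ** r = phi g ** s -> e ** r = r -> e ** s = s -> r = s.
Proof.
move=> E er es; have := congr1 (tw_mul a (phi g^-1)) E; rewrite -(tw_mulA (phi g^-1) (phi g) r) -(tw_mulA (phi g^-1) (phi g) s) phiV.
rewrite !tw_mulZl er es; apply: scK; by rewrite mulf_neq0 ?a_neq0.
Qed.

Definition Hs := [set d | phi d == lam (phi d) *s e].
Lemma inHs d k : phi d = k *s e -> d \in Hs.
Proof. by move=> E; rewrite inE (lamP E) E. Qed.
Lemma HsP d : d \in Hs -> phi d = lam (phi d) *s e.
Proof. by rewrite inE => /eqP. Qed.

Lemma Hs_group : group_set Hs.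
Proof.
apply/group_setP; split; first by apply: (inHs phi1).
move=> x y /HsP Ex /HsP Ey; apply: (@inHs _ (lam (phi x) * lam (phi y) / a x y)).
have := phiM x y; rewrite Ex Ey tw_mulZl tw_mulZr eid scA => E.
apply: (scK (a_neq0 x y)); rewrite -E scA; congr (_ *s _).
by rewrite -Ex -Ey [RHS]mulrCA mulfV ?a_neq0 // mulr1.
Qed.

Lemma comm_in_Hs x y : [~ x, y]%g \in Hs.
Proof.
set c := [~ x, y]%g; set w := (y * x)%g.
have Exy : (x * y = w * c)%g by rewrite commgC.
have E1 := phiM w c; rewrite -Exy in E1.
have E2 : phi x ** phi y = phi y ** phi x by apply: ecomm.
rewrite !phiM in E2.
have E3 : phi (x * y)%g = (a y x / a x y) *s phi w.
  apply: (scK (a_neq0 x y)); rewrite E2 scA; congr (_ *s _).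
  by rewrite mulrC mulfVK ?a_neq0.
apply: (@inHs _ (a w c * (a y x / a x y))).
apply: (phi_cancel (g := w)); last by rewrite tw_mulZr eid.
  by rewrite E1 E3 scA tw_mulZr phie.
by rewrite ephi.
Qed.

Local Notation N := ([set: gT]^`(1))%g.

Lemma N_sub_Hs : N \subset Hs.
Proof.
have -> : Hs = Group Hs_group by [].
rewrite derg1 /commg_set gen_subG; apply/subsetP => _ /imset2P [x y _ _ ->].
exact: comm_in_Hs.
Qed.

Lemma normN g : g \in 'N(N)%g.
Proof. by apply: (subsetP (normal_norm (der_normal 1 [set: gT]))); rewrite inE. Qed.

Lemma cosetM g h : (coset N g * coset N h = coset N (g * h))%g.
Proof. by rewrite morphM //= ?normN. Qed.

Definition t g := repr (coset N g).
Definition dd g := (g * (t g)^-1)%g.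
Lemma dd_in g : dd g \in N.
Proof.
have : t g \in (coset N g : {set gT}) by apply: mem_repr_coset.
rewrite val_coset ?normN // mem_rcoset => H.
have -> : dd g = ((t g * g^-1)^-1)%g by rewrite invMg invgK.
by rewrite groupV.
Qed.
Lemma ddt g : (dd g * t g)%g = g.
Proof. by rewrite /dd mulgKV. Qed.

Definition psi g := lam (phi (dd g)) / a (dd g) (t g).

Lemma phi_dd g : phi (dd g) = lam (phi (dd g)) *s e.
Proof. exact/HsP/(subsetP N_sub_Hs)/dd_in. Qed.

Lemma psi_neq0 g : psi g != 0.
Proof.
rewrite /psi mulf_neq0 ?invr_eq0 ?a_neq0 //.
apply: contraNneq (phi_neq0 (dd g)) => E; by rewrite phi_dd E sc0.
Qed.

Lemma phi_psi g : phi g = psi g *s phi (t g).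
Proof.
have := phiM (dd g) (t g); rewrite ddt phi_dd tw_mulZl ephi => E.
apply: (scK (a_neq0 (dd g) (t g))); rewrite scA -E; congr (_ *s _).
by rewrite /psi mulrC mulfVK ?a_neq0.
Qed.

Definition alpha' g h := a g h * psi (g * h)%g / (psi g * psi h).

Lemma alpha'_neq0 g h : alpha' g h != 0.
Proof. rewrite /alpha'; apply: mulf_neq0; first by rewrite mulf_neq0 ?a_neq0 ?psi_neq0.
by rewrite invr_eq0 mulf_neq0 ?psi_neq0. Qed.

Lemma rel g h : phi (t g) ** phi (t h) = alpha' g h *s phi (t (g * h)%g).
Proof.
have := phiM g h; rewrite (phi_psi g) (phi_psi h) (phi_psi (g * h)%g) tw_mulZl tw_mulZr scA scA => E.
have nz : psi g * psi h != 0 by rewrite mulf_neq0 ?psi_neq0.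
apply: (scK nz); rewrite E scA; congr (_ *s _).
by rewrite /alpha'; field; rewrite ?psi_neq0.
Qed.

Lemma alpha'_det g1 h1 g2 h2 : t g1 = t g2 -> t h1 = t h2 ->
  t (g1 * h1)%g = t (g2 * h2)%g -> alpha' g1 h1 = alpha' g2 h2.
Proof.
move=> E1 E2 E3; apply: (sc_inj (v := phi (t (g1 * h1)%g))); last exact: phi_neq0.
by rewrite -rel E3 -rel E1 E2.
Qed.

Definition b (x y : coset_of N) := alpha' (repr x) (repr y).

Lemma bE g h : b (coset N g) (coset N h) = alpha' g h.
Proof.
apply: alpha'_det; rewrite /t ?coset_reprK //.
by rewrite -!cosetM !coset_reprK.
Qed.

Lemma alpha'_sym g h : alpha' g h = alpha' h g.
Proof.
apply: (sc_inj (v := phi (t (g * h)%g))); last exact: phi_neq0.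
have E : t (g * h)%g = t (h * g)%g.
  have cN : ([~ g, h] \in N)%g by rewrite derg1 mem_commg ?inE.
  by rewrite /t; congr repr; rewrite [in LHS]commgC -cosetM (coset_id cN) mulg1.
rewrite -rel E -rel; exact: ecomm.
Qed.

Lemma alpha'_coc x y z : alpha' x y * alpha' (x * y)%g z = alpha' y z * alpha' x (y * z)%g.
Proof.
case: ca => _ co.
have nx := psi_neq0 x; have ny := psi_neq0 y; have nz := psi_neq0 z.
have nxy := psi_neq0 (x * y)%g; have nyz := psi_neq0 (y * z)%g.
rewrite /alpha' -!mulgA.
set K := psi (x * (y * z))%g / (psi x * psi y * psi z).
transitivity ((a x y * a (x * y)%g z) * K); first by rewrite /K mulgA; field; rewrite ?nx ?ny ?nz ?nxy ?nyz.
by rewrite co /K; field; rewrite ?nx ?ny ?nz ?nxy ?nyz.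
Qed.

Lemma fwd_main : in_inflated_Ext a.
Proof.
exists b; split; first split; first split.
- by move=> x y; rewrite /b alpha'_neq0.
- move=> x y z; rewrite -(coset_reprK x) -(coset_reprK y) -(coset_reprK z).
  by rewrite !cosetM !bE alpha'_coc.
- move=> x y; rewrite /b alpha'_sym //.
exists (fun x => (psi x)^-1); split; first by move=> x; rewrite invr_eq0 psi_neq0.
move=> x y; rewrite bE /alpha' invrK.
field; by rewrite !psi_neq0.
Qed.

End Fwd.


Local Notation N := ([set: gT]^`(1))%g.

Lemma sc_sum k I (r : seq I) (P : pred I) (G : I -> A) :
  k *s (\sum_(i <- r | P i) G i) = \sum_(i <- r | P i) k *s G i.
Proof. by apply/ffunP => z; rewrite ffunE !sum_ffunE mulr_sumr; apply: eq_bigr => i _; rewrite ffunE. Qed.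

Lemma sc_muln k (u : A) n : k *s (u *+ n) = (k * n%:R) *s u.
Proof. by apply/ffunP => z; rewrite !ffunE ffunMnE -[RHS]mulrA mulr_natl. Qed.

Section Bwd.
Variable b : coset_of N -> coset_of N -> F.
Variable f : gT -> F.
Hypothesis bcoc : cocycle2 b.
Hypothesis bsym : forall x y, b x y = b y x.
Hypothesis fnz : forall x, f x != 0.
Hypothesis bf : forall x y, b (coset N x) (coset N y) = f x * f y * (f (x * y)%g)^-1 * a x y.
Hypothesis pN : (#|N|%:R : F) != 0.

Definition V g := f g *s U g.
Definition al g h := b (coset N g) (coset N h).
Definition kap := b 1%g 1%g.
Definition m := (#|N|%:R * kap)^-1.
Definition c := m *s \sum_(d in N) V d.

Lemma kap_neq0 : kap != 0.
Proof. by case: bcoc => nz _; apply: nz. Qed.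

Lemma VV g h : V g ** V h = al g h *s V (g * h)%g.
Proof.
rewrite /V tw_mulZl tw_mulZr tw_mulUU !scA /al bf; congr (_ *s _).
by field; rewrite fnz.
Qed.

Lemma UV x : U x = (f x)^-1 *s V x.
Proof. by rewrite /V scA mulVf ?fnz // sc1. Qed.

Lemma b1y y : b 1%g y = kap.
Proof.
case: bcoc => nz co; have := co 1%g 1%g y; rewrite !mul1g => E.
by apply: (mulIf (nz 1%g y)); rewrite -E mulrC.
Qed.

Lemma alN d y : d \in N -> al d y = kap /\ al y d = kap.
Proof. by move=> dN; rewrite /al (coset_id dN) b1y bsym b1y. Qed.

Lemma cV y : c ** V y = (m * kap) *s \sum_(d in N) V (d * y)%g.
Proof.
rewrite /c tw_mulZl tw_mulsl sc_sum sc_sum; apply: eq_bigr => d dN.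
by rewrite VV (alN y dN).1 scA.
Qed.

Lemma Vc y : V y ** c = (m * kap) *s \sum_(d in N) V (y * d)%g.
Proof.
rewrite /c tw_mulZr tw_mulsr sc_sum sc_sum; apply: eq_bigr => d dN.
by rewrite VV (alN y dN).2 scA.
Qed.

Lemma sumN_conj y : \sum_(d in N) V (d * y)%g = \sum_(d in N) V (y * d)%g.
Proof.
rewrite [RHS](reindex_inj (conjg_inj y)) /=; apply: eq_big => d.
  by rewrite memJ_norm ?normN.
by move=> _; rewrite conjgE mulKVg.
Qed.

Lemma sumN_shift n x : n \in N -> \sum_(d in N) V (d * (n * x))%g = \sum_(d in N) V (d * x)%g.
Proof.
move=> nN; rewrite [RHS](reindex_inj (mulIg n)) /=; apply: eq_big => d.
  by rewrite groupMr.
by move=> _; rewrite mulgA.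
Qed.

Lemma c_central : tw_central a c.
Proof.
move=> u; rewrite (decomp u) tw_mulsl tw_mulsr; apply: eq_bigr => x _.
by rewrite tw_mulZl tw_mulZr UV tw_mulZl tw_mulZr cV Vc sumN_conj.
Qed.

Lemma c_idem : c ** c = c.
Proof.
rewrite {1}/c tw_mulZl tw_mulsl.
rewrite (eq_bigr (fun _ => (m * kap) *s \sum_(d in N) V d)); last first.
  move=> d dN; rewrite Vc; congr (_ *s _).
  rewrite [RHS](reindex_inj (mulgI d)) /=; apply: eq_big => // d'.
  by rewrite groupMl.
rewrite sumr_const sc_muln scA /c; congr (_ *s _).
rewrite /m; field; by rewrite pN kap_neq0.
Qed.

Lemma c_neq0 : c != 0.
Proof.
apply/eqP => /ffunP /(_ 1%g); rewrite zeroE ffunE sum_ffunE (bigD1 1%g) ?group1 //= big1.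
  rewrite !ffunE eqxx mulr1 addr0 => /eqP; rewrite mulf_eq0 (negbTE (fnz _)) orbF.
  by rewrite /m invr_eq0 mulf_eq0 (negbTE pN) (negbTE kap_neq0).
by move=> d /andP [_ d1]; rewrite !ffunE eq_sym (negbTE d1) mulr0.
Qed.

Lemma cV_coset n x : n \in N -> c ** V (n * x)%g = c ** V x.
Proof. by move=> nN; rewrite !cV sumN_shift. Qed.

Lemma cU x : c ** U x = (f x)^-1 *s (c ** V x).
Proof. by rewrite {1}UV tw_mulZr. Qed.

Lemma c_commU g h : (c ** U g) ** (c ** U h) = (c ** U h) ** (c ** U g).
Proof.
rewrite !(phiM c_central c_idem) /phi !cU !scA.
have nN : (g * h * (h * g)^-1 \in N)%g.
  have -> : (g * h * (h * g)^-1 = [~ g^-1, h^-1])%g.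
    by rewrite /commg /conjg !invgK invMg !mulgA.
  by rewrite derg1 mem_commg ?inE.
have -> : (g * h = (g * h * (h * g)^-1) * (h * g))%g by rewrite mulgKV.
rewrite cV_coset // mulgKV; congr (_ *s _).
have := bsym (coset N g) (coset N h); rewrite !bf => E.
have nz := fnz; apply: (mulIf (mulf_neq0 (fnz g) (fnz h))).
move: E; rewrite -[(f h * f g)]mulrC.
move=> E; transitivity (f g * f h / f (g * h)%g * a g h); first ring.
by rewrite E; ring.
Qed.

End Bwd.


Lemma comm_ext e : (forall g h, (e ** U g) ** (e ** U h) = (e ** U h) ** (e ** U g)) ->
  forall u v, (e ** u) ** (e ** v) = (e ** v) ** (e ** u).
Proof.
move=> H.
have H1 g v : (e ** U g) ** (e ** v) = (e ** v) ** (e ** U g).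
  rewrite (decomp v) !tw_mulsr tw_mulsl; apply: eq_bigr => y _.
  by rewrite !tw_mulZr tw_mulZl H.
move=> u v; rewrite (decomp u) !tw_mulsr tw_mulsl; apply: eq_bigr => x _.
by rewrite !tw_mulZr tw_mulZl H1.
Qed.

Definition vec (u : A) : 'rV[F]_#|gT| := \row_i u (enum_val i).
Definition Mx (e : A) : 'M[F]_#|gT| := \matrix_(i, j) (e ** U (enum_val i)) (enum_val j).

Lemma vecD u v : vec (u + v) = vec u + vec v.
Proof. by apply/rowP => i; rewrite !mxE ffunE. Qed.
Lemma vec0 : vec 0 = 0.
Proof. by apply/rowP => i; rewrite !mxE zeroE. Qed.
Lemma vecZ k u : vec (k *s u) = k *: vec u.
Proof. by apply/rowP => i; rewrite !mxE ffunE. Qed.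
Lemma vec_sum I (r : seq I) (P : pred I) (G : I -> A) :
  vec (\sum_(i <- r | P i) G i) = \sum_(i <- r | P i) vec (G i).
Proof. exact: (big_morph vec vecD vec0). Qed.
Lemma rowMx e g : row (enum_rank g) (Mx e) = vec (e ** U g).
Proof. by apply/rowP => j; rewrite !mxE enum_rankK. Qed.

Lemma vec_in e x : (vec (e ** x) <= Mx e)%MS.
Proof.
rewrite (decomp x) tw_mulsr vec_sum; apply: summx_sub => g _.
by rewrite tw_mulZr vecZ; apply: scalemx_sub; rewrite -rowMx; apply: row_sub.
Qed.

Lemma vec_inv e u : (vec u <= Mx e)%MS -> exists x, u = e ** x.
Proof.
case/submxP => w E; exists (\sum_i w 0 i *s U (enum_val i)).
apply/ffunP => z; have := congr1 (fun M : 'rV_#|gT| => M 0 (enum_rank z)) E.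
rewrite /= mxE enum_rankK => ->; rewrite mxE tw_mulsr sum_ffunE.
by apply: eq_bigr => i _; rewrite tw_mulZr ffunE mxE enum_rankK.
Qed.

Lemma Mx_sub e f0 : e ** f0 = f0 -> (Mx f0 <= Mx e)%MS.
Proof.
move=> H; apply/row_subP => i; rewrite -(enum_valK i) rowMx -{1}H tw_mulA.
exact: vec_in.
Qed.

Lemma ltMx e f0 : tw_central_idem a e -> tw_central_idem a f0 -> e ** f0 = f0 -> f0 != e ->
  (\rank (Mx f0) < \rank (Mx e))%N.
Proof.
move=> [ecen eid] [fcen fid] ef ne; apply: rank_ltmx; rewrite ltmxE Mx_sub //=.
apply/negP => sub.
have : (vec e <= Mx f0)%MS.
  by apply: submx_trans sub; rewrite -{1}eid; apply: vec_in.
case/vec_inv => x Ex; move/eqP: ne; apply.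
have : f0 ** e = e by rewrite {2}Ex Ex -tw_mulA fid.
by rewrite -ecen ef.
Qed.

Lemma prim_step e : tw_central_idem a e -> e != 0 ->
  tw_primitive_central_idem a e \/
  exists f0, [/\ tw_central_idem a f0, e ** f0 = f0, f0 != 0 & (\rank (Mx f0) < \rank (Mx e))%N].
Proof.
move=> ce en.
case: (Classical_Prop.classic (forall f, tw_central_idem a f -> e ** f = f -> f = 0 \/ f = e)) => prim.
  by left; split; [|split].
right; move: prim => /Classical_Pred_Type.not_all_ex_not [f0 H].
have [cf H1] := Classical_Prop.imply_to_and _ _ H.
have [ef H2] := Classical_Prop.imply_to_and _ _ H1.
have [n0 ne] := Classical_Prop.not_or_and _ _ H2.
have n0' : f0 != 0 by apply/eqP.
have ne' : f0 != e by apply/eqP.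
exists f0; split => //.
exact: ltMx.
Qed.

Lemma prim_exists k : forall e, tw_central_idem a e -> e != 0 -> (\rank (Mx e) <= k)%N ->
  exists e0, tw_primitive_central_idem a e0 /\ e ** e0 = e0.
Proof.
elim: k => [|k IH] e ce en rk.
  case: (prim_step ce en) => [pe|[f0 [cf ef n0 lt]]].
    by exists e; split => //; case: ce.
  by move: (leq_trans lt rk).
case: (prim_step ce en) => [pe|[f0 [cf ef n0 lt]]].
  by exists e; split => //; case: ce.
have [e0 [pe0 fe0]] := IH f0 cf n0 (leq_trans lt rk).
by exists e0; split => //; rewrite -fe0 -tw_mulA ef.
Qed.

End TW.

Theorem proposition2p3 (gT : finGroupType) (F : fieldType) (a : gT -> gT -> F) :
  [pchar F]^'.-nat #|gT|%N ->
  cocycle2 a ->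
  has_commutative_simple_component a <-> in_inflated_Ext a.
Proof.
move=> hp ca; split.
  case=> e [[[ecen eid] [e0 _]] ecomm].
  case: (pickP (fun z => e z != 0)) => [z0 ez0 | none].
    exact: (fwd_main ca ecen eid ez0 ecomm).
  by case/eqP: e0; apply/ffunP => z; rewrite zeroE; apply/eqP; move: (none z) => /negbFE.
case=> b [[bcoc bsym] [f [fnz bf]]].
have pN : (#|([set: gT]^`(1))%g|%:R : F) != 0.
  rewrite natf_neq0_pchar; apply: pnat_dvd hp; rewrite -cardsT; apply: cardSg; apply: subsetT.
have cc : tw_central_idem a (c b f).
  by split; [apply: c_central | apply: c_idem].
have cn : c b f != 0 by apply: c_neq0.
have [e0 [pe0 ce0]] := prim_exists ca cc cn (leqnn _).
exists e0; split => // u v.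
have E w : tw_mul a e0 w = tw_mul a (c b f) (tw_mul a e0 w) by rewrite -tw_mulA // ce0.
rewrite (E u) (E v); apply: comm_ext => // g h.
by apply: c_commU.
Qed.
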